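(* For each $t\in[0,\pi/6]$ and each family label $(\eta\pm)$ with $\eta\in\{0,1,2,3\}$, the $9\times 9$ matrix $R^{(\eta\pm)}(t)$ with entries $R^{(\eta\pm)}_{ij}(t)=\operatorname{Tr}\!\left[\Pi^{(\eta\pm)}_i(t)\,Q_j\right]$ (which satisfies $\Pi^{(\eta\pm)}_i(t)=\sum_j R^{(\eta\pm)}_{ij}(t)\Pi_j$) is given by $$R^{(\eta\pm)}(t)=\left[P^{(\eta\pm)}\right]^{-1}R(t)\,P^{(\eta\pm)},$$ and it is a rotation matrix, i.e. orthogonal with $\det R^{(\eta\pm)}(t)=1$.
   Context: Let $\omega=e^{2\pi i/3}$, standard basis $|0\rangle,|1\rangle,|2\rangle$ of $\mathbb{C}^3$, $X|j\rangle=|j+1\bmod 3\rangle$, $Z|j\rangle=\omega^j|j\rangle$. Canonical Hesse SIC: with $|\psi_0\rangle=\frac1{\sqrt2}(0,1,-1)^T$ and $i=3m+n+1$ ($m,n\in\{0,1,2\}$), $\Pi_i$ is the projector onto $X^mZ^n|\psi_0\rangle$; its dual basis is $Q_j=\frac13(4\Pi_j-I)$, so $\operatorname{Tr}(Q_j\Pi_k)=\delta_{jk}$. Fiducial vectors: $|\psi_t^{(0\pm)}\rangle=\frac1{\sqrt2}(0,e^{\mp it},-e^{\pm it})^T$ and, for $\eta=1,2,3$, $|\psi_t^{(\eta\pm)}\rangle=\sqrt{\tfrac23}\big(\omega^\eta\sin t,\ \sin(t\pm\tfrac{2\pi}{3}),\ \sin(t\mp\tfrac{2\pi}{3})\big)^T$.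 $\Pi^{(\eta\pm)}_i(t)$ is the projector onto $X^mZ^n|\psi^{(\eta\pm)}_t\rangle$ with $i=3m+n+1$. Permutations of $\{1,\dots,9\}$, listed as $(p(1),\dots,p(9))$: $p^{(0+)}=(1,2,3,4,5,6,7,8,9)$, $p^{(0-)}=(1,3,2,4,6,5,7,9,8)$, $p^{(1+)}=(1,5,9,2,6,7,3,4,8)$, $p^{(1-)}=(1,9,5,2,7,6,3,8,4)$, $p^{(2+)}=(1,6,8,2,4,9,3,5,7)$, $p^{(2-)}=(1,8,6,2,9,4,3,7,5)$, $p^{(3+)}=(1,4,7,2,5,8,3,6,9)$, $p^{(3-)}=(1,7,4,2,8,5,3,9,6)$. $P^{(\eta\pm)}$ is the permutation matrix with $P^{(\eta\pm)}_{ij}=\delta_{j,p^{(\eta\pm)}(i)}$. Let $a(t)=\frac13(1+2\cos 2t)$, $A(t)=\begin{pmatrix}a(t)&a(t-\frac\pi3)&a(t+\frac\pi3)\\ a(t+\frac\pi3)&a(t)&a(t-\frac\pi3)\\ a(t-\frac\pi3)&a(t+\frac\pi3)&a(t)\end{pmatrix}$, and $R(t)=\mathrm{diag}(A(t),A(t),A(t))=I_3\otimes A(t)$ (block diagonal). *)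

(* Defs.v *)
From Stdlib Require Import Reals Lra ClassicalEpsilon FunctionalExtensionality.
From HB Require Import structures.
From mathcomp Require Import all_boot all_order all_algebra.
Set Implicit Arguments. Unset Strict Implicit. Unset Printing Implicit Defensive.

Definition Reqb (x y : R) : bool := if Req_EM_T x y then true else false.
Lemma Reqb_axiom : Equality.axiom Reqb.
Proof. move=> x y; rewrite /Reqb; case: Req_EM_T => h; by constructor. Qed.
HB.instance Definition _ := hasDecEq.Build R Reqb_axiom.

Definition Rfind (P : pred R) (n : nat) : option R :=
  match excluded_middle_informative (exists x, P x) with
  | left h => Some (proj1_sig (constructive_indefinite_description _ h))
  | right _ => None
  end.
Lemma Rfind_correct P n x : Rfind P n = Some x -> P x.
Proof.
rewrite /Rfind; case: excluded_middle_informative => // h [<-].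
by case: constructive_indefinite_description.
Qed.
Lemma Rfind_complete (P : pred R) : (exists x, P x) -> exists n, Rfind P n.
Proof. move=> h; exists 0%N; rewrite /Rfind; by case: excluded_middle_informative. Qed.
Lemma Rfind_ext (P Q : pred R) : P =1 Q -> Rfind P =1 Rfind Q.
Proof.
move=> eqPQ; have -> : P = Q.
  by apply: functional_extensionality => x; apply: eqPQ.
by [].
Qed.
HB.instance Definition _ := hasChoice.Build R Rfind_correct Rfind_complete Rfind_ext.

Lemma R_addNr : left_inverse R0 Ropp Rplus.
Proof. move=> x; lra. Qed.
Lemma R_add0r : left_id R0 Rplus.
Proof. move=> x; lra. Qed.
Lemma R_addrA : associative Rplus.
Proof. move=> x y z; lra. Qed.
Lemma R_addrC : commutative Rplus.
Proof. move=> x y; lra. Qed.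
HB.instance Definition _ :=
  GRing.isZmodule.Build R R_addrA R_addrC R_add0r R_addNr.

Lemma R_mulrA : associative Rmult.
Proof. move=> x y z; ring. Qed.
Lemma R_mulrC : commutative Rmult.
Proof. move=> x y; ring. Qed.
Lemma R_mul1r : left_id R1 Rmult.
Proof. move=> x; ring. Qed.
Lemma R_mulrDl : left_distributive Rmult Rplus.
Proof. move=> x y z; ring. Qed.
Lemma R_oner_neq0 : (R1 : R) != (R0 : R).
Proof. apply/eqP; exact: R1_neq_R0. Qed.
HB.instance Definition _ :=
  GRing.Zmodule_isComNzRing.Build R R_mulrA R_mulrC R_mul1r R_mulrDl R_oner_neq0.

Definition Rinv' (x : R) : R := if Reqb x R0 then R0 else Rinv x.
Lemma R_mulVf (x : R) : x != R0 -> Rmult (Rinv' x) x = R1.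
Proof.
move=> /eqP hx; rewrite /Rinv' /Reqb.
destruct (Req_EM_T x R0) as [e|ne]; [by case: hx | by apply: Rinv_l].
Qed.
Lemma R_invr0 : Rinv' R0 = R0.
Proof. rewrite /Rinv' /Reqb; destruct (Req_EM_T R0 R0) as [e|ne]; [by [] | by case: ne]. Qed.
HB.instance Definition _ := GRing.ComNzRing_isField.Build R R_mulVf R_invr0.

Record C := mkC { Re : R; Im : R }.
Local Open Scope R_scope.
Definition Cofr (r : R) : C := mkC r 0.
Definition C0 : C := mkC 0 0.
Definition Cadd (z w : C) : C := mkC (Re z + Re w) (Im z + Im w).
Definition Copp (z : C) : C := mkC (- Re z) (- Im z).
Definition Cmul (z w : C) : C :=
  mkC (Re z * Re w - Im z * Im w) (Re z * Im w + Im z * Re w).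
Definition Cconj (z : C) : C := mkC (Re z) (- Im z).
Definition Cscal (r : R) (z : C) : C := mkC (r * Re z) (r * Im z).
Definition Cnorm2 (z : C) : R := Re z * Re z + Im z * Im z.
Fixpoint Cpow (z : C) (n : nat) : C :=
  match n with O => Cofr 1 | S k => Cmul z (Cpow z k) end.
Definition expi (th : R) : C := mkC (cos th) (sin th).
Definition omega : C := expi (2 * PI / 3).

(* vectors of C^3, components indexed by 0,1,2 *)
Definition vec3 := nat -> C.
Definition mkvec3 (a b c : C) : vec3 :=
  fun k => match k with 0%nat => a | 1%nat => b | _ => c end.
Definition sum3 (f : nat -> C) : C := Cadd (f 0%nat) (Cadd (f 1%nat) (f 2%nat)).
Definition vnorm2 (v : vec3) : R := Cnorm2 (v 0%nat) + Cnorm2 (v 1%nat) + Cnorm2 (v 2%nat).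

(* X|j> = |j+1 mod 3>,  Z|j> = omega^j |j> *)
Definition Xop (v : vec3) : vec3 := fun k => v ((k + 2) mod 3)%nat.
Definition Zop (v : vec3) : vec3 := fun k => Cmul (Cpow omega k) (v k).
Definition displace (m n : nat) (v : vec3) : vec3 := Nat.iter m Xop (Nat.iter n Zop v).

Definition cmat3 := nat -> nat -> C.
Definition cmul3 (A B : cmat3) : cmat3 := fun a b => sum3 (fun k => Cmul (A a k) (B k b)).
Definition ctr3 (A : cmat3) : C := sum3 (fun k => A k k).
Definition cid3 : cmat3 := fun a b => if Nat.eqb a b then Cofr 1 else C0.
Definition proj (v : vec3) : cmat3 :=
  fun a b => Cscal (/ vnorm2 v) (Cmul (v a) (Cconj (v b))).

(* Index convention: the paper's index i in {1..9}, i = 3m+n+1, is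
   represented by i' : 'I_9 with i' = i - 1 = 3m+n, so m = i' / 3, n = i' mod 3. *)
Definition idx_m (i : nat) : nat := (i %/ 3)%N.
Definition idx_n (i : nat) : nat := (i %% 3)%N.

Definition psi0 : vec3 := mkvec3 C0 (Cofr (/ sqrt 2)) (Cofr (- / sqrt 2)).
Definition PiH (i : nat) : cmat3 := proj (displace (idx_m i) (idx_n i) psi0).
Definition Qdual (j : nat) : cmat3 :=
  fun a b => Cscal (/ 3) (Cadd (Cscal 4 (PiH j a b)) (Copp (cid3 a b))).

(* family labels (eta, sign): eta in {0,1,2,3}, s = true for '+', false for '-' *)
Definition sgn (s : bool) : R := if s then 1 else -1.
Definition fiducial (eta : nat) (s : bool) (t : R) : vec3 :=
  match eta with
  | 0%nat => mkvec3 C0 (Cscal (/ sqrt 2) (expi (- sgn s * t)))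
                      (Copp (Cscal (/ sqrt 2) (expi (sgn s * t))))
  | _ => mkvec3 (Cscal (sqrt (2/3)) (Cscal (sin t) (Cpow omega eta)))
                (Cofr (sqrt (2/3) * sin (t + sgn s * (2 * PI / 3))))
                (Cofr (sqrt (2/3) * sin (t - sgn s * (2 * PI / 3))))
  end.
Definition PiF (eta : nat) (s : bool) (t : R) (i : nat) : cmat3 :=
  proj (displace (idx_m i) (idx_n i) (fiducial eta s t)).

Definition Rfam_entry (eta : nat) (s : bool) (t : R) (i j : nat) : C :=
  ctr3 (cmul3 (PiF eta s t i) (Qdual j)).

(* permutations, listed 1-based as in the paper *)
Definition perm_list (eta : nat) (s : bool) : seq nat :=
  match eta, s with
  | 0%nat, true  => [:: 1; 2; 3; 4; 5; 6; 7; 8; 9]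
  | 0%nat, false => [:: 1; 3; 2; 4; 6; 5; 7; 9; 8]
  | 1%nat, true  => [:: 1; 5; 9; 2; 6; 7; 3; 4; 8]
  | 1%nat, false => [:: 1; 9; 5; 2; 7; 6; 3; 8; 4]
  | 2%nat, true  => [:: 1; 6; 8; 2; 4; 9; 3; 5; 7]
  | 2%nat, false => [:: 1; 8; 6; 2; 9; 4; 3; 7; 5]
  | _, true      => [:: 1; 4; 7; 2; 5; 8; 3; 6; 9]
  | _, false     => [:: 1; 7; 4; 2; 8; 5; 3; 9; 6]
  end%N.
Close Scope R_scope.

Local Open Scope ring_scope.
(* P_{ij} = delta_{j, p(i)}  (0-based: j+1 = p(i+1)) *)
Definition Pmat (eta : nat) (s : bool) : 'M[R]_9 :=
  \matrix_(i < 9, j < 9) (if (j.+1 == nth 0%N (perm_list eta s) i)%N then 1 else 0).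

Definition aR (t : R) : R := ((1 + 2 * cos (2 * t)) / 3)%R.
Definition Amat (t : R) : 'M[R]_3 :=
  \matrix_(i < 3, j < 3)
    match (val i, val j) with
    | (0, 0)%N => aR t            | (0, 1)%N => aR (t - PI/3)%R | (0, 2)%N => aR (t + PI/3)%R
    | (1, 0)%N => aR (t + PI/3)%R | (1, 1)%N => aR t            | (1, 2)%N => aR (t - PI/3)%R
    | (2, 0)%N => aR (t - PI/3)%R | (2, 1)%N => aR (t + PI/3)%R | _ => aR t
    end.
(* R(t) = diag(A,A,A) = I_3 (x) A(t) *)
Definition Rbig (t : R) : 'M[R]_9 :=
  \matrix_(i < 9, j < 9)
    (if (i %/ 3 == j %/ 3)%N then Amat t (inZp (i %% 3)) (inZp (j %% 3)) else 0).

(* Main.v *)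
From Stdlib Require Import Reals Lra Lia.
Require Import Defs.
From HB Require Import structures.
From mathcomp Require Import all_boot all_order all_algebra all_fingroup.
From mathcomp Require ring.

Open Scope R_scope.
Definition ipC (u v : vec3) : C := sum3 (fun k => Cmul (Cconj (u k)) (v k)).

Lemma omega_eq : omega = mkC (-1/2) (sqrt 3 / 2).
Proof. unfold omega, expi. replace (2 * PI / 3) with (2 * (PI/3)) by field.
rewrite cos_2PI3 sin_2PI3. reflexivity. Qed.

Lemma r3sq : sqrt 3 * sqrt 3 = 3. Proof. apply sqrt_sqrt; lra. Qed.

Lemma Ceq (a b : C) : Re a = Re b -> Im a = Im b -> a = b.
Proof. destruct a, b; simpl; intros; subst; reflexivity. Qed.

Lemma Cmul_assoc a b c : Cmul a (Cmul b c) = Cmul (Cmul a b) c.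
Proof. apply Ceq; unfold Cmul; simpl; ring. Qed.

Lemma Cpow_add a m n : Cpow a (Nat.add m n) = Cmul (Cpow a m) (Cpow a n).
Proof. induction m as [|m IH]; simpl.
- apply Ceq; unfold Cmul, Cofr; simpl; ring.
- rewrite IH Cmul_assoc. reflexivity. Qed.

Lemma omega3 : Cpow omega 3 = Cofr 1.
Proof. simpl. rewrite omega_eq. unfold Cmul, Cofr; apply Ceq; simpl.
- unfold Rdiv. ring_simplify. replace (sqrt 3 ^ 2) with 3. field. simpl. rewrite Rmult_1_r r3sq. reflexivity.
- unfold Rdiv. ring_simplify. replace (sqrt 3 ^ 3) with (3 * sqrt 3). field. simpl. rewrite Rmult_1_r. rewrite <- Rmult_assoc, r3sq. reflexivity.
Qed.

Lemma Cmul1 z : Cmul (Cofr 1) z = z.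
Proof. apply Ceq; unfold Cmul, Cofr; simpl; ring. Qed.

Lemma omega_mod n : Cpow omega n = Cpow omega (Nat.modulo n 3).
Proof.
rewrite {1}(Nat.div_mod_eq n 3). rewrite Cpow_add.
assert (H : forall q, Cpow omega (Nat.mul 3 q) = Cofr 1).
{ induction q as [|q IH]. reflexivity.
  replace (Nat.mul 3 (S q)) with (Nat.add 3 (Nat.mul 3 q)) by lia. rewrite Cpow_add omega3 IH Cmul1. reflexivity. }
rewrite H Cmul1. reflexivity.
Qed.

Lemma Zn n v k : Nat.iter n Zop v k = Cmul (Cpow omega (Nat.mul n k)) (v k).
Proof. induction n as [|n IH]; simpl.
- rewrite Cmul1. reflexivity.
- unfold Zop at 1. rewrite IH Cmul_assoc -Cpow_add. reflexivity.
Qed.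

Lemma Xm m w k : (k < 3)%coq_nat -> Nat.iter m Xop w k = w (Nat.modulo (Nat.add k (Nat.mul 2 m)) 3).
Proof. revert k. induction m as [|m IH]; intros k Hk; cbn [Nat.iter].
- f_equal. rewrite Nat.mul_0_r Nat.add_0_r Nat.mod_small; [reflexivity|exact Hk].
- change (Nat.iter (S m) Xop w k) with (Nat.iter m Xop w (Nat.modulo (Nat.add k 2) 3)). rewrite IH.
  + f_equal. rewrite Nat.add_mod_idemp_l; [|lia]. f_equal. lia.
  + apply Nat.mod_upper_bound; lia.
Qed.

Lemma disp_eq m n v k : (k < 3)%coq_nat -> displace m n v k = Cmul (Cpow omega (Nat.modulo (Nat.mul n (Nat.modulo (Nat.add k (Nat.mul 2 m)) 3)) 3)) (v (Nat.modulo (Nat.add k (Nat.mul 2 m)) 3)).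
Proof. intro Hk. unfold displace. rewrite Xm // Zn -omega_mod. reflexivity. Qed.

Lemma w1 : Cpow omega 1 = mkC (-1/2) (sqrt 3/2).
Proof. rewrite omega_eq. apply Ceq; unfold Cmul, Cofr; simpl; field. Qed.
Lemma w2 : Cpow omega 2 = mkC (-1/2) (- (sqrt 3/2)).
Proof. simpl. rewrite omega_eq. apply Ceq; unfold Cmul, Cofr; simpl; unfold Rdiv; ring_simplify; [| field].
replace (sqrt 3 ^ 2) with 3. field. simpl. rewrite Rmult_1_r r3sq. reflexivity. Qed.
Lemma w0 : Cpow omega 0 = Cofr 1. Proof. reflexivity. Qed.


Lemma powr3 n : sqrt 3 ^ S (S n) = 3 * sqrt 3 ^ n.
Proof. simpl. rewrite <- Rmult_assoc, r3sq. reflexivity. Qed.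
Lemma powy n : sqrt (2/3) ^ S (S n) = 2/3 * sqrt (2/3) ^ n.
Proof. simpl. rewrite <- Rmult_assoc, sqrt_sqrt; lra. Qed.
Lemma powx n : (/ sqrt 2) ^ S (S n) = 1/2 * (/ sqrt 2) ^ n.
Proof. simpl. rewrite <- Rmult_assoc, <- Rinv_mult, sqrt_sqrt; lra. Qed.
Lemma sqrt2_neq0 : sqrt 2 <> 0.
Proof. apply Rgt_not_eq, sqrt_lt_R0; lra. Qed.

Ltac natc :=
  repeat match goal with
  | |- context [idx_m ?n] => let v := eval vm_compute in (idx_m n) in change (idx_m n) with v
  | |- context [idx_n ?n] => let v := eval vm_compute in (idx_n n) in change (idx_n n) with v
  | |- context [Nat.modulo ?a ?b] => let v := eval vm_compute in (Nat.modulo a b) in change (Nat.modulo a b) with v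
  | |- context [Nat.div ?a ?b] => let v := eval vm_compute in (Nat.div a b) in change (Nat.div a b) with v
  | |- context [Nat.eqb ?a ?b] => let v := eval vm_compute in (Nat.eqb a b) in change (Nat.eqb a b) with v
  | |- context [Nat.sub ?a ?b] => let v := eval vm_compute in (Nat.sub a b) in change (Nat.sub a b) with v
  end; cbv iota beta.

Definition dif (b a : nat) : nat :=
  Nat.add (Nat.mul 3 (Nat.modulo (Nat.sub (Nat.add (Nat.div b 3) 3) (Nat.div a 3)) 3))
          (Nat.modulo (Nat.sub (Nat.add (Nat.modulo b 3) 3) (Nat.modulo a 3)) 3).

Ltac destr9 i := destruct i as [|[|[|[|[|[|[|[|[|i]]]]]]]]]; try (exfalso; lia).

Lemma cov (f : vec3) (a b : nat) : (a < 9)%coq_nat -> (b < 9)%coq_nat ->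
  Cnorm2 (ipC (displace (idx_m a) (idx_n a) psi0) (displace (idx_m b) (idx_n b) f)) =
  Cnorm2 (ipC (displace 0 0 psi0) (displace (idx_m (dif b a)) (idx_n (dif b a)) f)).
Proof.
intros Ha Hb. unfold ipC, sum3, dif.
repeat (rewrite disp_eq; [|lia]).
generalize (f 0%nat) (f 1%nat) (f 2%nat). intros [a0 b0] [a1 b1] [a2 b2].
destr9 a; destr9 b; natc;
rewrite ?w0 ?w1 ?w2; unfold psi0, mkvec3;
unfold Cnorm2, Cmul, Cconj, Cscal, Cadd, Copp, Cofr, C0; cbn [Re Im];
unfold Rdiv; ring_simplify; rewrite ?powr3 ?powx; field; exact sqrt2_neq0.
Qed.


Lemma sgn_sq s : sgn s * sgn s = 1. Proof. destruct s; simpl; lra. Qed.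
Lemma cs_sgn s t : cos (sgn s * t) = cos t /\ sin (sgn s * t) = sgn s * sin t.
Proof. destruct s; simpl.
- replace (1 * t) with t by ring. split; ring.
- replace (-1 * t) with (- t) by ring. rewrite cos_neg sin_neg. split; ring. Qed.
Lemma expi_p s t : expi (sgn s * t) = mkC (cos t) (sgn s * sin t).
Proof. unfold expi. destruct (cs_sgn s t) as [H1 H2]. rewrite H1 H2. reflexivity. Qed.
Lemma expi_m s t : expi (- sgn s * t) = mkC (cos t) (- sgn s * sin t).
Proof. unfold expi. replace (- sgn s * t) with (- (sgn s * t)) by ring.
rewrite cos_neg sin_neg. destruct (cs_sgn s t) as [H1 H2]. rewrite H1 H2. f_equal. ring. Qed.
Lemma sin_p s t : sin (t + sgn s * (2 * PI / 3)) = - sin t / 2 + sgn s * sqrt 3 * cos t / 2.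
Proof. replace (2 * PI / 3) with (2 * (PI/3)) by field. destruct s; simpl.
- replace (1 * (2 * (PI/3))) with (2 * (PI/3)) by ring. rewrite sin_plus cos_2PI3 sin_2PI3. field.
- replace (t + -1 * (2 * (PI/3))) with (t - 2 * (PI/3)) by ring. rewrite sin_minus cos_2PI3 sin_2PI3. field. Qed.
Lemma sin_m s t : sin (t - sgn s * (2 * PI / 3)) = - sin t / 2 - sgn s * sqrt 3 * cos t / 2.
Proof. replace (2 * PI / 3) with (2 * (PI/3)) by field. destruct s; simpl.
- replace (1 * (2 * (PI/3))) with (2 * (PI/3)) by ring. rewrite sin_minus cos_2PI3 sin_2PI3. field.
- replace (t - -1 * (2 * (PI/3))) with (t + 2 * (PI/3)) by ring. rewrite sin_plus cos_2PI3 sin_2PI3. field. Qed.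

Definition tcodes (eta : nat) (s : bool) : list nat :=
  match eta, s with
  | 0%nat, true  => [:: 0; 2; 1; 3; 3; 3; 3; 3; 3]
  | 0%nat, false => [:: 0; 1; 2; 3; 3; 3; 3; 3; 3]
  | 1%nat, true  => [:: 0; 3; 3; 3; 2; 3; 3; 3; 1]
  | 1%nat, false => [:: 0; 3; 3; 3; 1; 3; 3; 3; 2]
  | 2%nat, true  => [:: 0; 3; 3; 3; 3; 2; 3; 1; 3]
  | 2%nat, false => [:: 0; 3; 3; 3; 3; 1; 3; 2; 3]
  | _, true      => [:: 0; 3; 3; 2; 3; 3; 1; 3; 3]
  | _, false     => [:: 0; 3; 3; 1; 3; 3; 2; 3; 3]
  end%N.

Definition valc (t : R) (k : nat) : R :=
  match k with
  | 0%nat => cos t ^ 2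
  | 1%nat => (cos t / 2 + sqrt 3 * sin t / 2) ^ 2
  | 2%nat => (cos t / 2 - sqrt 3 * sin t / 2) ^ 2
  | _ => (cos t ^ 2 + sin t ^ 2) / 4
  end.

Lemma tab (eta : nat) (s : bool) (t : R) (d : nat) : (eta < 4)%coq_nat -> (d < 9)%coq_nat ->
  Cnorm2 (ipC (displace 0 0 psi0) (displace (idx_m d) (idx_n d) (fiducial eta s t))) =
  valc t (nth 3%nat (tcodes eta s) d).
Proof.
intros He Hd. unfold ipC, sum3.
repeat (rewrite disp_eq; [|lia]).
destruct eta as [|[|[|[|eta]]]]; try (exfalso; lia);
unfold fiducial; rewrite ?expi_m ?expi_p ?sin_p ?sin_m ?omega3 ?w1 ?w2;
destruct s; unfold sgn;
destr9 d; natc; cbn [seq.nth tcodes valc];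
rewrite ?w0 ?w1 ?w2; unfold psi0, mkvec3;
unfold Cnorm2, Cmul, Cconj, Cscal, Cadd, Copp, Cofr, C0; cbn [Re Im];
unfold Rdiv; ring_simplify; rewrite ?powr3 ?powx ?powy; field; exact sqrt2_neq0.
Qed.


Lemma tr_lemma (v u : vec3) : vnorm2 v = 1 -> vnorm2 u = 1 ->
 ctr3 (cmul3 (proj v) (fun a b => Cscal (/3) (Cadd (Cscal 4 (proj u a b)) (Copp (cid3 a b))))) = Cofr ((4 * Cnorm2 (ipC u v) - 1)/3).
Proof.
intros Hv Hu. unfold proj. rewrite Hv Hu Rinv_1.
revert Hv Hu. unfold vnorm2, ipC, ctr3, cmul3, sum3, cid3, Cnorm2, Cofr. simpl.
destruct (v 0%nat) as [a0 b0]; destruct (v 1%nat) as [a1 b1]; destruct (v 2%nat) as [a2 b2].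
destruct (u 0%nat) as [c0 d0]; destruct (u 1%nat) as [c1 d1]; destruct (u 2%nat) as [c2 d2].
unfold Cadd, Cmul, Cscal, Cconj, Copp, C0; simpl. intros Hv Hu. f_equal.
- transitivity ((4 * ((c0 * a0 - - d0 * b0 + (c1 * a1 - - d1 * b1 + (c2 * a2 - - d2 * b2))) *
   (c0 * a0 - - d0 * b0 + (c1 * a1 - - d1 * b1 + (c2 * a2 - - d2 * b2))) +
   (c0 * b0 + - d0 * a0 + (c1 * b1 + - d1 * a1 + (c2 * b2 + - d2 * a2))) *
   (c0 * b0 + - d0 * a0 + (c1 * b1 + - d1 * a1 + (c2 * b2 + - d2 * a2)))) - (a0 * a0 + b0 * b0 + (a1 * a1 + b1 * b1) + (a2 * a2 + b2 * b2)))/3).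
  + unfold Rdiv; ring.
  + rewrite Hv. unfold Rdiv; ring.
- ring.
Qed.

Lemma Cnorm2_mul a b : Cnorm2 (Cmul a b) = Cnorm2 a * Cnorm2 b.
Proof. unfold Cnorm2, Cmul; simpl; ring. Qed.

Lemma Cnorm2_pow n : Cnorm2 (Cpow omega n) = 1.
Proof. induction n as [|n IH]; simpl.
- unfold Cnorm2, Cofr; simpl; ring.
- rewrite Cnorm2_mul IH omega_eq. unfold Cnorm2; simpl.
  replace (-1/2 * (-1/2) + sqrt 3 / 2 * (sqrt 3 / 2)) with (1/4 + (sqrt 3 * sqrt 3)/4) by field.
  rewrite r3sq. field.
Qed.

Lemma vnorm2_Z v : vnorm2 (Zop v) = vnorm2 v.
Proof. unfold vnorm2, Zop.
assert (H1 : Cnorm2 omega = 1).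
{ rewrite omega_eq. unfold Cnorm2; simpl.
  replace (-1/2 * (-1/2) + sqrt 3 / 2 * (sqrt 3 / 2)) with (1/4 + (sqrt 3 * sqrt 3)/4) by field.
  rewrite r3sq. field. }
assert (H0 : Cnorm2 (Cofr 1) = 1) by exact (Cnorm2_pow 0).
rewrite !Cnorm2_mul ?H1 ?H0. ring. Qed.

Lemma vnorm2_X v : vnorm2 (Xop v) = vnorm2 v.
Proof. unfold vnorm2, Xop.
change (Nat.modulo (addn 0 2) 3) with 2%nat.
change (Nat.modulo (addn 1 2) 3) with 0%nat.
change (Nat.modulo (addn 2 2) 3) with 1%nat. ring. Qed.

Lemma vnorm2_iter F n v : (forall w, vnorm2 (F w) = vnorm2 w) -> vnorm2 (Nat.iter n F v) = vnorm2 v.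
Proof. intro H. induction n as [|n IH]; [reflexivity|].
change (Nat.iter (S n) F v) with (F (Nat.iter n F v)). rewrite H. exact IH. Qed.

Lemma vnorm2_disp m n v : vnorm2 (displace m n v) = vnorm2 v.
Proof. unfold displace. rewrite vnorm2_iter; [|exact vnorm2_X]. apply vnorm2_iter. exact vnorm2_Z. Qed.

Lemma cs1 t : cos t ^ 2 + sin t ^ 2 = 1.
Proof. rewrite <- (sin2_cos2 t). unfold Rsqr. ring. Qed.

Lemma vnorm2_psi0 : vnorm2 psi0 = 1.
Proof. unfold vnorm2, psi0, mkvec3, Cnorm2, Cofr, C0; simpl.
assert (Hx : / sqrt 2 * / sqrt 2 = / 2).
{ rewrite <- Rinv_mult, sqrt_sqrt; lra. }
replace (- / sqrt 2 * - / sqrt 2) with (/ sqrt 2 * / sqrt 2) by ring. rewrite Hx. field. Qed.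

Lemma vnorm2_fid eta s t : (eta < 4)%coq_nat -> vnorm2 (fiducial eta s t) = 1.
Proof.
intro He. assert (Hc := cs1 t).
destruct eta as [|[|[|[|eta]]]]; try (exfalso; lia);
unfold fiducial; rewrite ?expi_m ?expi_p ?sin_p ?sin_m ?omega3 ?w1 ?w2;
unfold vnorm2, mkvec3, Cnorm2, Cmul, Cconj, Cscal, Cadd, Copp, Cofr, C0; cbn [Re Im];
destruct s; unfold sgn; unfold Rdiv; ring_simplify; rewrite ?powr3 ?powx ?powy;
set (c := cos t) in *; set (sn := sin t) in *;
replace (sn ^ 2) with (1 - c ^ 2) by lra; field; exact sqrt2_neq0.
Qed.


Definition sig (eta : nat) (s : bool) (i : nat) : nat := Nat.pred (nth 0%nat (perm_list eta s) i).
Definition Gcode (i j : nat) : nat :=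
  if Nat.eqb (Nat.div i 3) (Nat.div j 3) then
    (if Nat.eqb (Nat.modulo i 3) (Nat.modulo j 3) then 0%nat
     else if Nat.eqb (Nat.modulo j 3) (Nat.modulo (Nat.add (Nat.modulo i 3) 1) 3) then 1%nat else 2%nat)
  else 3%nat.

Lemma codes_ok eta s i j : (eta < 4)%coq_nat -> (i < 9)%coq_nat -> (j < 9)%coq_nat ->
  nth 3%nat (tcodes eta s) (dif (sig eta s i) (sig eta s j)) = Gcode i j.
Proof.
intros He Hi Hj.
destruct eta as [|[|[|[|eta]]]]; try (exfalso; lia); destruct s;
destr9 i; destr9 j; vm_compute; reflexivity.
Qed.

Lemma sig_lt eta s i : (eta < 4)%coq_nat -> (i < 9)%coq_nat -> (sig eta s i < 9)%coq_nat.
Proof.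
intros He Hi.
destruct eta as [|[|[|[|eta]]]]; try (exfalso; lia); destruct s;
destr9 i; vm_compute; lia.
Qed.

Lemma dif_lt a b : (dif a b < 9)%coq_nat.
Proof. unfold dif.
assert (H1 := Nat.mod_upper_bound (Nat.sub (Nat.add (Nat.div a 3) 3) (Nat.div b 3)) 3).
assert (H2 := Nat.mod_upper_bound (Nat.sub (Nat.add (Nat.modulo a 3) 3) (Nat.modulo b 3)) 3).
lia. Qed.

Lemma entry eta s t i j : (eta < 4)%coq_nat -> (i < 9)%coq_nat -> (j < 9)%coq_nat ->
  Rfam_entry eta s t (sig eta s i) (sig eta s j) = Cofr ((4 * valc t (Gcode i j) - 1)/3).
Proof.
intros He Hi Hj.
unfold Rfam_entry, PiF, Qdual, PiH.
rewrite tr_lemma.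
- rewrite cov; try (apply sig_lt; assumption).
  rewrite tab; [| exact He | apply dif_lt].
  rewrite codes_ok; auto.
- rewrite vnorm2_disp. apply vnorm2_fid; exact He.
- rewrite vnorm2_disp. apply vnorm2_psi0.
Qed.

Close Scope R_scope.
Import GRing.Theory.

Section RS.
Local Open Scope ring_scope.
Definition Rval (t : R) (k : nat) : R :=
  match k with
  | 0%N => aR t
  | 1%N => aR (t - PI/3)%R
  | 2%N => aR (t + PI/3)%R
  | _ => 0
  end.
Lemma Rinv3 : (3 : R)^-1 = Rinv (IZR 3).
Proof. rewrite /GRing.inv /=. rewrite /Rinv' /Reqb. case: Req_EM_T => // H. exfalso. change (3%:R) with (IZR 3) in H. lra. Qed.
Lemma aR_eq t : aR t = Rdiv (Rplus (IZR 1) (Rmult (IZR 2) (cos (Rmult (IZR 2) t)))) (IZR 3).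
Proof. rewrite /aR Rinv3. reflexivity. Qed.
Lemma sub_eq (t : R) : t - PI / 3 = Rminus t (Rdiv PI (IZR 3)).
Proof. rewrite Rinv3. reflexivity. Qed.
Lemma add_eq (t : R) : t + PI / 3 = Rplus t (Rdiv PI (IZR 3)).
Proof. rewrite Rinv3. reflexivity. Qed.
Lemma RaddE (a b : R) : a + b = Rplus a b. Proof. reflexivity. Qed.
Lemma RmulE (a b : R) : a * b = Rmult a b. Proof. reflexivity. Qed.
Lemma RoppE (a : R) : - a = Ropp a. Proof. reflexivity. Qed.
Lemma R1E : (1 : R) = IZR 1. Proof. reflexivity. Qed.
Lemma R0E : (0 : R) = IZR 0. Proof. reflexivity. Qed.
Lemma Rn1 : (1%:R : R) = IZR 1. Proof. reflexivity. Qed.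
Lemma Rn0 : (0%:R : R) = IZR 0. Proof. reflexivity. Qed.
Lemma Amat_inord t : Amat t = \matrix_(i < 3, j < 3) Amat t (inord i) (inord j).
Proof. apply/matrixP => i j. rewrite mxE !inord_val. reflexivity. Qed.
End RS.

Open Scope R_scope.

Lemma cos2m t : cos (2 * (t - PI/3)) = - (cos t ^ 2 - sin t ^ 2) / 2 + sqrt 3 * sin t * cos t.
Proof. replace (2 * (t - PI/3)) with (2 * t - 2 * (PI/3)) by ring.
rewrite cos_minus cos_2PI3 sin_2PI3 cos_2a sin_2a. field. Qed.
Lemma cos2p t : cos (2 * (t + PI/3)) = - (cos t ^ 2 - sin t ^ 2) / 2 - sqrt 3 * sin t * cos t.
Proof. replace (2 * (t + PI/3)) with (2 * t + 2 * (PI/3)) by ring.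
rewrite cos_plus cos_2PI3 sin_2PI3 cos_2a sin_2a. field. Qed.
Lemma cos20 t : cos (2 * t) = cos t ^ 2 - sin t ^ 2.
Proof. rewrite cos_2a. ring. Qed.

Lemma pows t n : sin t ^ S (S n) = (1 - cos t ^ 2) * sin t ^ n.
Proof. rewrite <- (cs1 t). simpl. ring. Qed.

Ltac toR := rewrite ?addr0 ?sub_eq ?add_eq ?aR_eq ?RaddE ?RmulE ?RoppE ?Rn1 ?Rn0 ?R1E ?R0E.
Ltac trig_close :=
  rewrite ?cos2m ?cos2p ?cos20; unfold Rdiv; ring_simplify;
  rewrite ?pows ?powr3; field.

Lemma valR t k : (k < 4)%coq_nat -> (4 * valc t k - 1) / 3 = Rval t k.
Proof. intro Hk. destruct k as [|[|[|[|k]]]]; try (exfalso; lia); cbn [valc Rval]; toR; trig_close. Qed.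

Close Scope R_scope.
Module Det3.
Import ring.
Local Open Scope ring_scope.
Lemma det3 (R : comNzRingType) (f : nat -> nat -> R) : \det (\matrix_(i < 3, j < 3) f i j) =
  f 0%N 0%N * (f 1%N 1%N * f 2%N 2%N - f 1%N 2%N * f 2%N 1%N) - f 0%N 1%N * (f 1%N 0%N * f 2%N 2%N - f 1%N 2%N * f 2%N 0%N) + f 0%N 2%N * (f 1%N 0%N * f 2%N 1%N - f 1%N 1%N * f 2%N 0%N).
Proof.
rewrite (expand_det_row _ 0) !big_ord_recl big_ord0 /cofactor.
rewrite !(expand_det_row _ 0) !big_ord_recl !big_ord0 /cofactor !det_mx11 !mxE /=.
rewrite !expr0 !expr1 !expr2 /bump /=. ring.
Qed.
End Det3.
Definition det3 := Det3.det3.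

Section MX.
Local Open Scope ring_scope.

Ltac ord3 := repeat match goal with [ x : 'I_3 |- _ ] => case: x => [[|[|[|?]]] ?] // end.
Ltac ord6 := repeat match goal with [ x : 'I_(3+3) |- _ ] => case: x => [[|[|[|[|[|[|?]]]]]] ?] // end.

Lemma Rbig_block t : @eq 'M[R]_(3+(3+3)) (Rbig t) (block_mx (Amat t) 0 0 (block_mx (Amat t) 0 0 (Amat t))).
Proof.
apply/matrixP => i j.
rewrite -[i](@splitK 3 (3+3)) -[j](@splitK 3 (3+3)).
case: (split i) => [a|i']; case: (split j) => [b|j'].
- rewrite /= block_mxEul !mxE /=. ord3.
- rewrite /= block_mxEur !mxE /=. ord3; ord6.
- rewrite /= block_mxEdl !mxE /=. ord3; ord6.
- rewrite /= block_mxEdr.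
  rewrite -[i'](@splitK 3 3) -[j'](@splitK 3 3).
  case: (split i') => [a|a]; case: (split j') => [b|b].
  + rewrite /= block_mxEul !mxE /=. ord3.
  + rewrite /= block_mxEur !mxE /=. ord3.
  + rewrite /= block_mxEdl !mxE /=. ord3.
  + rewrite /= block_mxEdr !mxE /=. ord3.
Qed.

Lemma Rb_code t (i j : 'I_9) : Rbig t i j = Rval t (Gcode i j).
Proof.
rewrite mxE.
case: i => [[|[|[|[|[|[|[|[|[|i]]]]]]]]] Hi] //;
case: j => [[|[|[|[|[|[|[|[|[|j]]]]]]]]] Hj] //; rewrite /= ?mxE /=; reflexivity.
Qed.

Lemma A_orth t : (Amat t)^T *m Amat t = 1%:M.
Proof.
apply/matrixP => i j. rewrite !mxE !big_ord_recl big_ord0 !mxE.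
ord3; rewrite /= ?mxE /=; toR; trig_close.
Qed.
Lemma val_inord3 k : (k < 3)%N -> \val (inord k : 'I_3) = k.
Proof. exact: inordK. Qed.

Lemma A_det t : \det (Amat t) = 1.
Proof.
apply: (@etrans _ _ (IZR 1)); last by [].
rewrite Amat_inord (@det3 _ (fun a b => Amat t (inord a) (inord b))) !mxE !val_inord3 //= ?addr0.
toR. rewrite ?cos2m ?cos2p ?cos20; unfold Rdiv; ring_simplify; rewrite ?pows ?powr3; field.
Qed.

Lemma Rb_orth' t : @eq 'M[R]_(3+(3+3)) ((Rbig t : 'M_(3+(3+3)))^T *m (Rbig t : 'M_(3+(3+3)))) 1.
Proof.
rewrite Rbig_block !tr_block_mx !trmx0 !mulmx_block !mul0mx !mulmx0 !addr0 !add0r A_orth.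
by rewrite -!scalar_mx_block.
Qed.

Lemma Rb_orth t : (Rbig t)^T *m Rbig t = 1 :> 'M[R]_9.
Proof. exact: Rb_orth'. Qed.

Lemma Rb_det' t : \det (Rbig t : 'M_(3+(3+3))) = 1.
Proof.
by rewrite Rbig_block !det_ublock A_det !mulr1.
Qed.
Lemma Rb_det t : \det (Rbig t) = 1.
Proof. exact: Rb_det'. Qed.
End MX.

Close Scope R_scope.
Import GRing.Theory.
Local Open Scope ring_scope.

Definition sigf (eta : nat) (s : bool) (i : 'I_9) : 'I_9 := inord (sig eta s i).

Lemma sig_lt' (eta : nat) s (i : 'I_9) : (eta < 4)%N -> (sig eta s i < 9)%N.
Proof. move=> He. apply/ltP. apply: sig_lt; [exact/ltP | exact/ltP]. Qed.

Lemma sigf_inj (eta : nat) s : (eta < 4)%N -> injective (sigf eta s).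
Proof.
move=> He x y H. move/(congr1 val): H. rewrite /sigf /= !inordK; try exact: sig_lt'.
move=> H; apply: val_inj; move: H.
case: eta He => [|[|[|[|eta]]]] // _; case: s;
case: x => [[|[|[|[|[|[|[|[|[|x]]]]]]]]] Hx] //;
case: y => [[|[|[|[|[|[|[|[|[|y]]]]]]]]] Hy] //.
Qed.

Lemma Gcode_lt i j : (Gcode i j < 4)%coq_nat.
Proof. rewrite /Gcode. case: (Nat.eqb _ _); [case: (Nat.eqb _ _); [|case: (Nat.eqb _ _)]|]; lia. Qed.

Lemma Pmat_perm (eta : nat) s (He : (eta < 4)%N) :
  Pmat eta s = perm_mx (perm (@sigf_inj eta s He)).
Proof.
apply/matrixP => i j. rewrite perm_mxEsub !mxE permE /sigf.
case: eta He => [|[|[|[|eta]]]] // He; case: s;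
case: i => [[|[|[|[|[|[|[|[|[|i]]]]]]]]] Hi] //; rewrite /sig /=;
  by rewrite -val_eqE /= inordK // eqSS eq_sym; case: (_ == _).
Qed.

Theorem mainTheorem5 (eta : 'I_4) (s : bool) (t : R)
  (ht : Rle 0 t /\ Rle t (Rdiv PI 6)) :
  let M : 'M[R]_9 :=
    (invmx (Pmat eta s) *m Rbig t *m Pmat eta s)%R in
  (forall i j : 'I_9, Rfam_entry eta s t i j = Cofr (M i j)) /\
  ((M^T *m M)%R = 1%:M%R /\ \det M = 1%R).
Proof.
move=> M.
have He : (eta < 4)%N := ltn_ord eta.
set sg := perm (@sigf_inj eta s He).
have PQ : perm_mx sg *m perm_mx sg^-1 = 1%:M :> 'M[R]_9 by rewrite -perm_mxM mulgV perm_mx1.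
have QP : perm_mx sg^-1 *m perm_mx sg = 1%:M :> 'M[R]_9 by rewrite -perm_mxM mulVg perm_mx1.
have Hinv : invmx (perm_mx sg) = perm_mx sg^-1 :> 'M[R]_9.
  have Hu : (perm_mx sg : 'M[R]_9) \in unitmx.
    by rewrite unitmxE det_perm unitrX // unitrN1.
  by rewrite -[LHS]mulmx1 -PQ mulmxA mulVmx // mul1mx.
have HM : M = perm_mx sg^-1 *m Rbig t *m perm_mx sg.
  by rewrite /M Pmat_perm Hinv.
split.
- move=> i j.
  have HMe : M i j = Rbig t ((sg^-1)%g i) ((sg^-1)%g j).
    by rewrite HM -row_permE -[sg in perm_mx sg]invgK -col_permE !mxE.
  rewrite HMe.
  have Hv : forall k : 'I_9, nat_of_ord k = sig eta s ((sg^-1)%g k).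
    move=> k. rewrite -{1}(permKV sg k) permE /sigf inordK //. exact: sig_lt'.
  rewrite (Hv i) (Hv j) entry; try (apply/ltP; exact: ltn_ord).
  by rewrite Rb_code valR //; exact: Gcode_lt.
- split.
  + rewrite HM !trmx_mul !tr_perm_mx invgK.
    rewrite -!mulmxA (mulmxA (perm_mx sg)) PQ mul1mx (mulmxA _ (Rbig t)) Rb_orth mul1mx QP.
    by [].
  + rewrite HM !det_mulmx Rb_det mulr1 -det_mulmx QP det1. by [].
Qed.
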